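(* Let $k$ be a job such that there is exactly one job $j$ for which $(j,k)$ is a red pair. Then, in the schedule produced by $1$-SORT, \[ \frac{\sigma_k+D(j,k)}{\sigma_k+D^*(j,k)}\le\frac{\nu+\nu^2+2+\frac{2}{\mu}}{\nu+\nu^2+1+\frac{1}{\mu}}. \]
   Context: Setting: single machine, jobs $J=\{1,\dots,n\}$, each job $j$ with test time $t_j\ge0$ and processing time $p_j\ge0$ (revealed only when the test is executed); each job's test must be executed before its processing part, which may start any time after the test; operations are non-preemptive and the machine does one at a time. $\sigma_j=t_j+p_j$, $m_j=\max\{t_j,p_j\}$. Standing assumption (general position): no two of the $3n$ numbers $t_j,p_j,\sigma_j$ are equal, and $\sigma_k>0$. Algorithm $1$-SORT: keep a priority queue of available operations, initially the test of every job $j$ with priority $t_j$; repeatedly remove a minimum-priority operation and execute it immediately; after executing the test of $j$, insert the processing part of $j$ with priority $p_j$. For distinct jobs $j,k$, let $d_{k,j}$ be the total amount of time during which operations of $k$ are executed before the completion time of $j$, and $D(j,k)=d_{j,k}+d_{k,j}$, evaluated for the $1$-SORT schedule; $D^*(j,k)=\min\{\sigma_j,\sigma_k\}$. Fix constants $\mu>1$ and $0<\nu<1$ with $\mu\nu>1$ and $1+\frac1\mu\le\nu+\nu^2$. A job $j$ is imbalanced if $m_j\ge\mu\min\{t_j,p_j\}$. For distinct jobs $j,k$, the ordered pair $(j,k)$ is a red pair if $j$ is imbalanced, $m_j\ge t_k\ge\nu m_j$, and $p_k\ge\nu t_k$. *)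

(* Defs.v *)
From HB Require Import structures.
From mathcomp Require Import all_boot all_order all_algebra.
Set Implicit Arguments. Unset Strict Implicit. Unset Printing Implicit Defensive.
Import Order.TTheory GRing.Theory Num.Theory.
Local Open Scope ring_scope.

Section OneSort.
Variables (R : realFieldType) (n : nat) (t p : 'I_n -> R).

(* An operation: (j, true) = test of job j, (j, false) = processing part of j *)
Definition op := ('I_n * bool)%type.

Definition prio (o : op) : R := if o.2 then t o.1 else p o.1.

(* a minimum-priority element of a queue (first one among ties) *)
Fixpoint pickmin (s : seq op) : option op :=
  match s with
  | [::] => None
  | x :: s' => match pickmin s' with
               | None => Some x
               | Some y => if prio y < prio x then Some y else Some x
               end
  end.

(* one step of 1-SORT: state = (queue, sequence of executed operations) *)
Definition sort_step (st : seq op * seq op) : seq op * seq op :=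
  let: (Q, Sx) := st in
  match pickmin Q with
  | None => st
  | Some o => ((if o.2 then [:: (o.1, false)] else [::]) ++ rem o Q, rcons Sx o)
  end.

(* the sequence of operations in the order executed by 1-SORT
   (executed back-to-back from time 0, without idle time) *)
Definition one_sort_seq : seq op :=
  (iter (2 * n) sort_step ([seq (j, true) | j <- enum 'I_n], [::])).2.

(* d_{k,j}: total time during which operations of k are executed before
   the completion time of j (= completion of the processing part of j) *)
Definition dd (k j : 'I_n) : R :=
  let Sx := one_sort_seq in
  \sum_(o <- take (index (j, false) Sx).+1 Sx | o.1 == k) prio o.

Definition sigma (j : 'I_n) : R := t j + p j.
Definition mm (j : 'I_n) : R := Num.max (t j) (p j).

Definition DD (j k : 'I_n) : R := dd j k + dd k j.
Definition DDstar (j k : 'I_n) : R := Num.min (sigma j) (sigma k).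

Definition imbalanced (mu : R) (j : 'I_n) : Prop :=
  mm j >= mu * Num.min (t j) (p j).

Definition red_pair (mu nu : R) (j k : 'I_n) : Prop :=
  [/\ j != k, imbalanced mu j, mm j >= t k, t k >= nu * mm j & p k >= nu * t k].

Definition general_position : Prop :=
  uniq ([seq t j | j <- enum 'I_n] ++ [seq p j | j <- enum 'I_n]
        ++ [seq sigma j | j <- enum 'I_n]).

End OneSort.

(* Main.v *)
Require Import Defs.
From HB Require Import structures.
From mathcomp Require Import all_boot all_order all_algebra.
From mathcomp Require Import lra.
Set Implicit Arguments. Unset Strict Implicit. Unset Printing Implicit Defensive.
Import Order.TTheory GRing.Theory Num.Theory.
Local Open Scope ring_scope.

Section Sched.
Variables (R : realFieldType) (n : nat) (t p : 'I_n -> R).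
Hypotheses (ht : forall j, 0 <= t j) (hp : forall j, 0 <= p j).

Definition key (o : op n) : R := if o.2 then t o.1 else mm t p o.1.
Definition keyle : rel (op n) := fun x y => key x <= key y.

Lemma keyle_trans : transitive keyle.
Proof. by move=> y x z; rewrite /keyle; apply: le_trans. Qed.

Lemma prio_key o : prio t p o <= key o.
Proof. case: o => i [] //=; rewrite /prio /key /mm /=; by rewrite le_max lexx orbT. Qed.

Lemma pickmin_none s : pickmin t p s = None -> s = [::].
Proof. by case: s => //= x s; case: (pickmin t p s) => // y; case: ifP. Qed.

Lemma pickmin_some s o : pickmin t p s = Some o ->
  o \in s /\ forall y, y \in s -> prio t p o <= prio t p y.
Proof.
elim: s o => //= x s IH o.
case E: (pickmin t p s) => [y|].
  have [ys Hy] := IH _ E.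
  case: ifP => H [<-].
    split; first by rewrite inE ys orbT.
    move=> z; rewrite inE => /orP [/eqP ->|zs]; [exact: ltW|exact: Hy].
  split; first by rewrite inE eqxx.
  move=> z; rewrite inE => /orP [/eqP ->|zs]; first exact: lexx.
  apply: le_trans (Hy _ zs); by rewrite leNgt H.
move/pickmin_none: E => -> [<-]; split; first by rewrite inE eqxx.
by move=> z; rewrite inE => /eqP ->.
Qed.

Record Inv (Q Sx : seq (op n)) : Prop := MkInv {
  iuQ : uniq Q; iuS : uniq Sx;
  idisj : forall x, x \in Q -> x \notin Sx;
  ifalse : forall i, (i, false) \in Q ++ Sx -> (i, true) \in Sx;
  itrue : forall i, (i, true) \in Q ++ Sx;
  inotyet : forall i, (i, false) \notin Q ++ Sx -> (i, true) \in Q;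
  isort : sorted keyle Sx;
  ikey : forall x y, x \in Sx -> y \notin Sx -> key x <= key y }.

Lemma minkey Q Sx o y : Inv Q Sx -> pickmin t p Q = Some o -> y \in Q ->
  key o <= key y.
Proof.
move=> I /pickmin_some [oQ Ho] yQ.
have h1 : prio t p o <= key y := le_trans (Ho _ yQ) (prio_key y).
case: o oQ Ho h1 => i [] oQ Ho h1; first by [].
rewrite /key /= /mm ge_max h1 andbT.
apply: (ikey I (x := (i, true))); last by apply: (idisj I).
by apply: (ifalse I); rewrite mem_cat oQ.
Qed.

Lemma sorted_rcons' (s : seq (op n)) x :
  sorted keyle s -> (forall y, y \in s -> keyle y x) -> sorted keyle (rcons s x).
Proof.
case: s => //= y s Hs Hx; rewrite rcons_path Hs /=; apply: Hx.
by rewrite mem_last.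
Qed.

Lemma step_inv Q Sx : Inv Q Sx -> Inv (sort_step t p (Q, Sx)).1 (sort_step t p (Q, Sx)).2.
Proof.
move=> I; rewrite /sort_step.
case E: (pickmin t p Q) => [o|]; last by [].
have [oQ _] := pickmin_some E.
have oS : o \notin Sx := idisj I oQ.
have remQ : forall x, (x \in rem o Q) = (x != o) && (x \in Q).
  by move=> x; rewrite (mem_rem_uniq _ (iuQ I)) inE.
have newF : forall i, o = (i, true) -> (i, false) \notin Q ++ Sx.
  move=> i oi; apply/negP => /(ifalse I); rewrite -oi; by rewrite (negbTE oS).
have oT : o.2 -> (o.1, false) \notin Q ++ Sx.
  by case: o newF {oQ oS E remQ} => i [] // /(_ i erefl).
set Q' := _ ++ rem o Q; set S' := rcons Sx o.
have memQ' : forall x, x \in Q' = ((o.2 && (x == (o.1, false))) || ((x != o) && (x \in Q))).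
  move=> x; rewrite /Q' mem_cat remQ; by case: (o.2); rewrite ?inE.
have memS' : forall x, x \in S' = (x == o) || (x \in Sx).
  by move=> x; rewrite /S' mem_rcons inE.
constructor => /=.
- rewrite /Q'; case Eo: (o.2) => /=; last exact: rem_uniq (iuQ I).
  rewrite rem_uniq ?(iuQ I) // andbT remQ negb_and negbK.
  have := oT Eo; rewrite mem_cat negb_or => /andP [-> _]; by rewrite orbT.
- by rewrite /S' rcons_uniq oS (iuS I).
- move=> x; rewrite memQ' memS' negb_or.
  case/orP => [/andP [Eo /eqP ->]|/andP [xo xQ]].
    have := oT Eo; rewrite mem_cat negb_or => /andP [_ ->]; rewrite andbT.
    by apply/negP => /eqP Ho; move: Eo; rewrite -Ho.
  by rewrite xo (idisj I xQ).
- move=> i; rewrite mem_cat memQ' memS' -orbA => /orP [/andP [Eo /eqP Ex]|].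
    move: Ex => [->]; rewrite memS'; apply/orP; left; apply/eqP.
    by move: Eo; case: (o) => ? [].
  case/orP => [/andP [_ H]|/orP [/eqP Ho|H]].
  + by rewrite memS' (ifalse I) ?orbT // mem_cat H.
  + by rewrite memS' (ifalse I) ?orbT // mem_cat Ho oQ.
  + by rewrite memS' (ifalse I) ?orbT // mem_cat H orbT.
- move=> i; rewrite mem_cat memQ' memS'.
  have := itrue I i; rewrite mem_cat => /orP [H|->]; last by rewrite !orbT.
  case: (eqVneq (i, true) o) => [->|ne]; first by rewrite /= !orbT.
  by rewrite /= H !orbT.
- move=> i; rewrite mem_cat memQ' memS' !negb_or => /andP [/andP [H1 H2] /andP [H3 H4]].
  have nQS : (i, false) \notin Q ++ Sx.
    rewrite mem_cat negb_or H4 andbT.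
    move: H2; rewrite negb_and negbK => /orP [/eqP Ho|->//].
    by move: H3; rewrite Ho eqxx.
  have iQ := inotyet I nQS.
  rewrite memQ' iQ andbT; apply/orP; right; apply/eqP => Ho.
  by move: H1; rewrite -Ho /= eqxx.
- apply: sorted_rcons' (isort I) _ => y yS; rewrite /keyle; by apply: (ikey I).
- move=> x y; rewrite !memS' negb_or => /orP [/eqP ->|xS] /andP [yo yS];
    last by apply: (ikey I).
  case yQ: (y \in Q); first exact: minkey I E yQ.
  case: y yo yS yQ => i [] yo yS yQ.
    by move: (itrue I i); rewrite mem_cat yQ (negbTE yS).
  have nQS : (i, false) \notin Q ++ Sx by rewrite mem_cat yQ (negbTE yS).
  have iQ := inotyet I nQS.
  apply: le_trans (minkey I E iQ) _.
  by rewrite /key /= /mm le_max lexx.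
Qed.

Definition init : seq (op n) * seq (op n) := ([seq (j, true) | j <- enum 'I_n], [::]).

Lemma init_inv : Inv init.1 init.2.
Proof.
rewrite /init /=; constructor => //=.
- rewrite map_inj_uniq ?enum_uniq //; by move=> x y [].
- move=> i; rewrite cats0 => /mapP [x _] //.
- move=> i; rewrite cats0; apply/mapP; exists i => //; by rewrite mem_enum.
- move=> i _; apply/mapP; exists i => //; by rewrite mem_enum.
Qed.

Lemma iter_inv m : Inv (iter m (sort_step t p) init).1 (iter m (sort_step t p) init).2.
Proof.
elim: m => [|m IH]; first exact: init_inv.
rewrite iterS; case E: (iter m (sort_step t p) init) => [Q Sx].
rewrite E in IH; exact: step_inv.
Qed.

Lemma iter_prog m : (forall o, o \in (iter m (sort_step t p) init).2)
   \/ size (iter m (sort_step t p) init).2 = m.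
Proof.
elim: m => [|m IH]; first by right.
have I := iter_inv m.
rewrite iterS; case E: (iter m (sort_step t p) init) => [Q Sx].
rewrite E in IH I; rewrite /sort_step.
case P: (pickmin t p Q) => [o|] /=.
  case: IH => [H|H]; [left => x; by rewrite mem_rcons inE H orbT
                     |right; by rewrite size_rcons H].
left; move/pickmin_none: P => Q0; subst Q.
case=> i [].
  by have := itrue I i.
apply/negPn/negP => H.
have H' : (i, false) \notin [::] ++ Sx by [].
by have := inotyet I H'.
Qed.

Lemma all_in (s : seq (op n)) : uniq s -> size s = (2 * n)%N -> forall o, o \in s.
Proof.
move=> us ss o.
have c : #|[predC s]| = 0%N.
  have := cardC (mem s).
  rewrite (card_uniqP us) ss card_prod card_ord card_bool mulnC => /eqP.
  by rewrite -{2}[(n * 2)%N]addn0 eqn_add2l => /eqP.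
have := card0_eq c o; rewrite !inE => /negbFE; exact.
Qed.

Lemma sched_props :
  [/\ uniq (one_sort_seq t p), forall o, o \in one_sort_seq t p
    & sorted keyle (one_sort_seq t p)].
Proof.
have I := iter_inv (2 * n); rewrite /one_sort_seq.
split; [exact: iuS I| |exact: isort I].
case: (iter_prog (2 * n)) => // H; exact: all_in (iuS I) H.
Qed.

Lemma sum_job (s : seq (op n)) k : uniq s ->
  \sum_(o <- s | o.1 == k) prio t p o =
  (if (k, true) \in s then t k else 0) + (if (k, false) \in s then p k else 0).
Proof.
move=> us; rewrite big_mkcond /= big_uniq //= big_mkcond /=.
rewrite (bigD1 (k, true)) //= (bigD1 (k, false)) //=.
rewrite big1.
  by rewrite addr0 /prio /= eqxx; case: ((k, true) \in s); case: ((k, false) \in s).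
case=> i b /andP [H1 H2]; case: ifP => // _; case: ifP => // /eqP ik.
simpl in ik; subst i; by case: b H1 H2 => [/eqP|_ /eqP].
by apply/eqP; case.
Qed.

Lemma before (x y : op n) :
  x \in take (index y (one_sort_seq t p)).+1 (one_sort_seq t p) -> x != y ->
  key x <= key y.
Proof.
have [us alls ss] := sched_props.
set S := one_sort_seq t p.
rewrite in_take ?alls // ltnS leq_eqVlt => /orP [/eqP E|lt] ne.
  have := nth_index x (alls x); rewrite E nth_index ?alls // => Exy.
  by rewrite Exy eqxx in ne.
by have := sorted_ltn_index keyle_trans ss x y (alls x) (alls y) lt.
Qed.

Lemma dd_eq k j : dd t p k j =
  (if (k, true) \in take (index (j, false) (one_sort_seq t p)).+1 (one_sort_seq t p)
   then t k else 0) +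
  (if (k, false) \in take (index (j, false) (one_sort_seq t p)).+1 (one_sort_seq t p)
   then p k else 0).
Proof.
have [us _ _] := sched_props.
by rewrite /dd sum_job // take_uniq.
Qed.
End Sched.
Lemma arith (R : realFieldType) (tj pj tk pk mj nj mk u nu X : R) :
  0 <= tj -> 0 <= pj -> 0 <= tk -> 0 <= pk ->
  tj <= mj -> pj <= mj -> (mj = tj \/ mj = pj) -> nj = tj + pj - mj ->
  tk <= mk -> pk <= mk -> (mk = tk \/ mk = pk) ->
  0 < u -> u < nu -> 0 < nu -> nu < 1 -> 1 + u <= nu + nu ^+ 2 ->
  nj <= u * mj -> tk <= mj -> nu * mj <= tk -> nu * tk <= pk ->
  0 < tk + pk -> 0 < tj + pj ->
  (mj < mk /\ X <= tj + pj + tk) \/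
  (mk < mj /\ (X <= tk + pk \/ (X <= tk + pk + tj /\ tj <= mk))) ->
  (tk + pk + X) * (nu + nu ^+ 2 + 1 + u)
    <= (nu + nu ^+ 2 + 2 + 2 * u) * (tk + pk + Num.min (tj + pj) (tk + pk)).
Proof.
move=> htj hpj htk hpk hmj1 hmj2 hmj hnj hmk1 hmk2 hmk hu0 hunu hnu0 hnu1 hc
  himb htkmj hnutk hpknu hsk hsj hcase.
have hnu2 : 0 <= nu ^+ 2 := sqr_ge0 nu.
have hnu2' : nu ^+ 2 <= nu.
  have : 0 <= nu * (1 - nu) by apply: mulr_ge0; lra.
  rewrite expr2; lra.
have hunu0 : 0 <= u * nu by apply: mulr_ge0; lra.
set d := nu + nu ^+ 2 + 1 + u.
have hd : 0 < d by rewrite /d; lra.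
have hmj0 : 0 <= mj by lra.
have hnj0 : 0 <= nj by rewrite hnj; case: hmj => ->; lra.
case: hcase => [[hlt hX]|[hlt hX]].
- have pkmk : mk = pk by case: hmk => // E; move: hlt; rewrite E; lra.
  have h1 : u * mj <= nu * mj by apply: ler_wpM2r; lra.
  have hsjk : tj + pj <= tk + pk by lra.
  have -> : Num.min (tj + pj) (tk + pk) = tj + pj by apply/min_idPl.
  have e1 : (tk + pk + X) * d <= (tk + pk + tj + pj + tk) * d.
    by apply: ler_wpM2r; lra.
  apply: le_trans e1 _.
  have f1 : 0 <= (1 + u) * (tk + pk - (1 + nu) * tk) by apply: mulr_ge0; lra.
  have f2 : 0 <= (1 + u) * (tj + pj - tk) by apply: mulr_ge0; lra.
  have f3 : 0 <= tk * (1 + u + u * nu - nu ^+ 2) by apply: mulr_ge0; lra.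
  rewrite /d; lra.
- have hX' : X <= tk + pk + (if tj <= mk then tj else 0).
    case: hX => [h|[h1 h2]]; first by case: ifP => _; lra.
    by rewrite h2.
  set e := (if tj <= mk then tj else 0) in hX'.
  have he : 0 <= e /\ tj + pj >= mj + e /\ e <= u * mj.
    rewrite /e; case: ifP => H.
      have mjpj : mj = pj by case: hmj => // E; move: hlt; rewrite E; lra.
      split; first by [].
      split; first by lra.
      by move: himb; rewrite hnj mjpj; lra.
    have : 0 <= u * mj by apply: mulr_ge0; lra.
    by split; [lra|split; [case: hmj => ->; lra|lra]].
  case: he => he0 [he1 he2].
  have hue : 0 <= u * e by apply: mulr_ge0; lra.
  have e1 : (tk + pk + X) * d <= (2 * (tk + pk) + e) * d.
    by apply: ler_wpM2r; lra.
  apply: le_trans e1 _.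
  case: (leP (tj + pj) (tk + pk)) => hm.
  + have g1 : (nu + nu ^+ 2) * (tk + pk) <= (nu + nu ^+ 2) * (2 * mj).
      by apply: ler_wpM2l; lra.
    have g2 : 0 <= mj * (2 + 2 * u - nu - nu ^+ 2) by apply: mulr_ge0; lra.
    have g3 : 0 <= (nu + nu ^+ 2 + 2 + 2 * u) * (tj + pj - mj - e).
      by apply: mulr_ge0; lra.
    rewrite /d; lra.
  + have g1 : e * d <= u * mj * d by apply: ler_wpM2r; lra.
    have g2 : d <= 2 * (nu + nu ^+ 2) by rewrite /d; lra.
    have humj : 0 <= u * mj by apply: mulr_ge0; lra.
    have g3 : u * mj * d <= u * mj * (2 * (nu + nu ^+ 2)) by apply: ler_wpM2l.
    have g4a : nu * (nu * mj) <= nu * tk by apply: ler_wpM2l; lra.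
    have g4 : mj * (nu + nu ^+ 2) <= tk + pk by rewrite expr2; lra.
    have g5a : u * (mj * (nu + nu ^+ 2)) <= u * (tk + pk) by apply: ler_wpM2l; lra.
    rewrite /d in g1 g2 g3 *; lra.
Qed.

Lemma gp_facts (R : realFieldType) (n : nat) (t p : 'I_n -> R) (j k : 'I_n) :
  general_position t p -> j != k ->
  [/\ t j != t k, p j != p k, t j != p k & p j != t k].
Proof.
rewrite /general_position !cat_uniq => /and5P [ut htp up _ _] jk.
have inT : forall i, t i \in [seq t j | j <- enum 'I_n] by move=> i; rewrite map_f ?mem_enum.
have inP : forall i, p i \in [seq p j | j <- enum 'I_n] by move=> i; rewrite map_f ?mem_enum.
have tinj : injective t by apply/injectiveP.
have pinj : injective p by apply/injectiveP.
split.
- by apply/negP => /eqP /tinj E; rewrite E eqxx in jk.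
- by apply/negP => /eqP /pinj E; rewrite E eqxx in jk.
- apply/negP => /eqP E; move/negP: htp; apply; apply/hasP; exists (p k).
    by rewrite mem_cat inP.
  by rewrite /= -E inT.
- apply/negP => /eqP E; move/negP: htp; apply; apply/hasP; exists (p j).
    by rewrite mem_cat inP.
  by rewrite /= E inT.
Qed.

Theorem mainTheorem11 (R : realFieldType) (n : nat) (t p : 'I_n -> R)
  (mu nu : R)
  (ht : forall j, 0 <= t j) (hp : forall j, 0 <= p j)
  (hgp : general_position t p)
  (hsig : forall j, 0 < sigma t p j)
  (hmu : 1 < mu) (hnu0 : 0 < nu) (hnu1 : nu < 1) (hmunu : 1 < mu * nu)
  (hmunu2 : 1 + 1 / mu <= nu + nu ^+ 2)
  (j k : 'I_n)
  (hred : red_pair t p mu nu j k)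
  (huniq : forall j', red_pair t p mu nu j' k -> j' = j) :
  (sigma t p k + DD t p j k) / (sigma t p k + DDstar t p j k)
    <= (nu + nu ^+ 2 + 2 + 2 / mu) / (nu + nu ^+ 2 + 1 + 1 / mu).
Proof.
case: hred => jk imb h1 h2 h3.
have tj0 := ht j; have pj0 := hp j; have tk0 := ht k; have pk0 := hp k.
have [d1 d2 d3 d4] := gp_facts hgp jk.
have mu0 : 0 < mu by lra.
have u0 : 0 < mu^-1 by rewrite invr_gt0.
have unu : mu^-1 < nu.
  have := ltr_pM2l u0 1 (mu * nu); rewrite mulr1 mulKf ?gt_eqF // => ->; exact: hmunu.
rewrite div1r in hmunu2.
have hsk := hsig k; have hsj := hsig j; rewrite /sigma in hsk hsj.
have maxE : forall i, (mm t p i = t i \/ mm t p i = p i) /\ t i <= mm t p i /\ p i <= mm t p i.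
  move=> i; rewrite /mm; case: (leP (t i) (p i)) => H; (split; [first [by left | by right] | split; lra]).
have minE : Num.min (t j) (p j) = t j + p j - mm t p j.
  by rewrite /mm; case: (leP (t j) (p j)) => H; lra.
have himb : t j + p j - mm t p j <= mu^-1 * mm t p j.
  by rewrite ler_pdivlMl // -minE.
have [[mjE [mj1 mj2]] [mkE [mk1 mk2]]] := (maxE j, maxE k).
have mjk : mm t p j != mm t p k.
  by case: mjE => ->; case: mkE => ->.
rewrite ler_pdivrMr; last by rewrite /DDstar /sigma; case: (leP (t j + p j) (t k + p k)) => _; lra.
rewrite mulrAC ler_pdivlMr; last by rewrite div1r; lra.
rewrite div1r /DD /DDstar /sigma.
apply: (arith (mj := mm t p j) (nj := t j + p j - mm t p j) (mk := mm t p k)) => //.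
have pre := @before R n t p.
have ddE := @dd_eq R n t p.
case: (ltgtP (mm t p j) (mm t p k)) => [lt|lt|eq]; last by rewrite eq eqxx in mjk.
- left; split => //.
  have e1 : dd t p j k <= t j + p j.
    by rewrite ddE; case: ifP => _; case: ifP => _; lra.
  have e2 : dd t p k j <= t k.
    rewrite ddE; set P := take _ _.
    case H: ((k, false) \in P); last by case: ifP => _; lra.
    have := pre _ _ H; rewrite /key /= => H'.
    have hh : mm t p k <= mm t p j by apply: H'; apply/negP => /eqP [] E; rewrite E eqxx in jk.
    lra.
  lra.
- right; split => //.
  have e1 : dd t p k j <= t k + p k.
    by rewrite ddE; case: ifP => _; case: ifP => _; lra.
  have e2 : (dd t p j k <= 0) \/ (dd t p j k <= t j /\ t j <= mm t p k).
    rewrite ddE; case: ifP => H; last first.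
      left; case: ifP => H2; last lra.
      have := pre _ _ H2; rewrite /key /= => H'.
      have hh : mm t p j <= mm t p k by apply: H'; apply/negP => /eqP [] E; rewrite E eqxx in jk.
      lra.
    right.
    have := pre _ _ H; rewrite /key /= => H'.
    have tjle : t j <= mm t p k by apply: H'; apply/negP => /eqP [].
    split => //.
    case: ifP => H2; last lra.
    have := pre _ _ H2; rewrite /key /= => H''.
    have hh : mm t p j <= mm t p k by apply: H''; apply/negP => /eqP [] E; rewrite E eqxx in jk.
    lra.
  case: e2 => [e|[e e']]; [left|right]; lra.
Qed.
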